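(* In the multiple-choice secretary problem with predictions with capacity $k$, run the Learned Kleinberg algorithm with any threshold $\theta\ge 0$. For every instance with $M=\emptyset$, the algorithm's output $S$ satisfies $v(S)\ge (1-2\epsilon)\,v(S^* )$; in particular the algorithm is $(1-2\epsilon)$-competitive on such instances.
   Context: Multiple-choice secretary problem with predictions (continuous-time model): there are $n$ candidates $N=\{1,\dots,n\}$, each with actual value $v(i)>0$ (unknown in advance) and predicted value $\hat v(i)\ge 0$ (known in advance), and a capacity $k$. Each candidate independently receives an arrival time uniform on $[0,1]$; candidates are revealed in increasing order of arrival time, revealing index and actual value, and the algorithm irrevocably decides upon arrival whether to hire; at most $k$ candidates may be hired. For $S\subseteq N$, $v(S)=\sum_{i\in S}v(i)$, $\hat v(S)=\sum_{i\in S}\hat v(i)$. $S^*$ is a set of at most $k$ candidates maximizing $v$, $\epsilon=\max_{i\in N}|1-\hat v(i)/v(i)|$, and $M=\{i\in N : |1-\hat v(i)/v(i)|>\theta\}$. Learned Kleinberg algorithm with capacity $k$ and threshold $\theta$: fix $\hat S\in\arg\max_{S\subseteq N,|S|\le k}\hat v(S)$ and set $S=\emptyset$. Process candidates in arrival order; upon arrival of $i$: if $|1-\hat v(i)/v(i)|>\theta$, hire $i$, let $k'=k-|S|-1$, apply Kleinberg's (2005) multiple-choice secretary algorithm with capacity $k'$ to the remaining candidates obtaining $T$, and output $S\cup\{i\}\cup T$; otherwise, if $i\in\hat S$, hire $i$ (add it to $S$) and output $S$ if $|S|=k$. If all candidates are processed, output $S$. *)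

(* Defs.v *)
From mathcomp Require Import all_boot all_order all_algebra.
Set Implicit Arguments. Unset Strict Implicit. Unset Printing Implicit Defensive.
Import Order.TTheory GRing.Theory Num.Theory.
Local Open Scope ring_scope.

Section LK.
Variables (R : realFieldType) (n : nat).
Variables (v vh : 'I_n -> R).

Definition err (i : 'I_n) : R := `|1 - vh i / v i|.

(* epsilon = max_i err i  (errors are >= 0, so 0 is a neutral bottom) *)
Definition eps : R := \big[Num.max/0]_(i < n) err i.

Definition Mset (theta : R) : {set 'I_n} := [set i | theta < err i].

Definition val_of (f : 'I_n -> R) (S : {set 'I_n}) : R := \sum_(i in S) f i.

(* Learned Kleinberg with capacity k and threshold theta.
   [kleinberg k' s] is the set returned by Kleinberg's (2005) multiple-choice
   secretary algorithm with capacity k' run on the remaining arrival sequence s.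
   [Shat] is the fixed predicted-optimal set; [S] the current hired set;
   [s] the remaining candidates in arrival order. *)
Fixpoint learned_kleinberg (kleinberg : nat -> seq 'I_n -> {set 'I_n})
    (k : nat) (theta : R) (Shat S : {set 'I_n}) (s : seq 'I_n) : {set 'I_n} :=
  match s with
  | [::] => S
  | i :: s' =>
      if theta < err i then
        (S :|: [set i]) :|: kleinberg (k - #|S| - 1)%N s'
      else if i \in Shat then
        let S' := i |: S in
        if #|S'| == k then S'
        else learned_kleinberg kleinberg k theta Shat S' s'
      else learned_kleinberg kleinberg k theta Shat S s'
  end.

End LK.

(* Main.v *)
Require Import Defs.
From mathcomp Require Import all_boot all_order all_algebra.
From mathcomp Require Import lra.
Import Order.TTheory GRing.Theory Num.Theory.
Local Open Scope ring_scope.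

Lemma alg_out (R : realFieldType) (n k : nat) (v vh : 'I_n -> R) (theta : R)
    (kl : nat -> seq 'I_n -> {set 'I_n}) (Shat : {set 'I_n}) :
  (#|Shat| <= k)%N ->
  forall (s : seq 'I_n) (S : {set 'I_n}), (forall i, i \in s -> ~~ (theta < err v vh i)) ->
  S \subset Shat -> (forall x, x \in Shat -> (x \in S) || (x \in s)) ->
  learned_kleinberg v vh kl k theta Shat S s = Shat.
Proof.
move=> hk; elim=> [|i s IH] S hs hS hcov /=.
  apply/eqP; rewrite eqEsubset hS /=; apply/subsetP => x /hcov.
  by rewrite in_nil orbF.
rewrite (negbTE (hs i (mem_head _ _))).
have hs' : forall j, j \in s -> ~~ (theta < err v vh j).
  by move=> j hj; apply: hs; rewrite in_cons hj orbT.
case: ifP => hi.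
  have hS' : i |: S \subset Shat by rewrite subUset sub1set hi hS.
  case: ifP => /eqP hc.
    apply/eqP; rewrite eqEcard hS' hc hk.
    done.
  apply: IH => //.
  move=> x /hcov; rewrite in_cons in_setU1.
  by case: (x == i); rewrite ?orbT //= => ->.
apply: IH => // x hx; move: (hcov x hx); rewrite in_cons.
case: eqP => [ex|_] //=; by rewrite ex hi in hx.
Qed.

Lemma err_le_eps (R : realFieldType) (n : nat) (v vh : 'I_n -> R) i :
  err v vh i <= eps v vh.
Proof.
rewrite /eps (bigD1 i) //=.
by rewrite le_max lexx.
Qed.

Lemma eps_ge0 (R : realFieldType) (n : nat) (v vh : 'I_n -> R) :
  0 <= eps v vh.
Proof.
rewrite /eps; elim/big_rec: _ => // i x _ hx.
by rewrite le_max hx orbT.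
Qed.

Theorem lemma1 (R : realFieldType) (n k : nat) (v vh : 'I_n -> R)
    (theta : R)
    (kleinberg : nat -> seq 'I_n -> {set 'I_n})
    (Shat Sstar : {set 'I_n}) (arrival : seq 'I_n) :
  (forall i, 0 < v i) ->
  (forall i, 0 <= vh i) ->
  0 <= theta ->
  (* Kleinberg's subroutine selects at most k' of the remaining candidates *)
  (forall k' s, kleinberg k' s \subset [set x in s] /\ (#|kleinberg k' s| <= k')%N) ->
  (* Shat is a maximizer of the predicted value among sets of size <= k *)
  (#|Shat| <= k)%N ->
  (forall T : {set 'I_n}, (#|T| <= k)%N -> val_of vh T <= val_of vh Shat) ->
  (* Sstar is a maximizer of the actual value among sets of size <= k *)
  (#|Sstar| <= k)%N ->
  (forall T : {set 'I_n}, (#|T| <= k)%N -> val_of v T <= val_of v Sstar) ->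
  (* arrival order: every candidate arrives exactly once *)
  perm_eq arrival (enum 'I_n) ->
  (* M is empty *)
  Mset v vh theta = set0 ->
  (1 - 2 * eps v vh) * val_of v Sstar
    <= val_of v (learned_kleinberg v vh kleinberg k theta Shat set0 arrival).
Proof.
move=> vpos vhpos th0 _ hk hShat hk' hSstar hperm hM.
rewrite alg_out //; last first.
- by move=> x _; rewrite (perm_mem hperm) mem_enum orbT.
- by rewrite sub0set.
- move=> i _; apply/negP => hi.
  have : i \in Mset v vh theta by rewrite inE.
  by rewrite hM inE.
set e := eps v vh.
have e0 : 0 <= e by apply: eps_ge0.
have bnd : forall i, (1 - e) * v i <= vh i /\ vh i <= (1 + e) * v i.
  move=> i; have := @err_le_eps _ _ v vh i; rewrite /err -/e.
  have vi := vpos i.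
  have -> : 1 - vh i / v i = (v i - vh i) / v i.
    by rewrite mulrBl divff ?gt_eqF.
  rewrite normf_div (gtr0_norm vi) ler_pdivrMr // => h.
  move: (ler_norm (v i - vh i)) (ler_normr (v i - vh i)) => h1 h2.
  have h3 : - (v i - vh i) <= `|v i - vh i| by rewrite -normrN ler_norm.
  split; nra.
have up : val_of vh Shat <= (1 + e) * val_of v Shat.
  rewrite /val_of mulr_sumr; apply: ler_sum => i _; exact: (bnd i).2.
have lo : (1 - e) * val_of v Sstar <= val_of vh Sstar.
  rewrite /val_of mulr_sumr; apply: ler_sum => i _; exact: (bnd i).1.
have hv := hShat _ hk'.
have s0 : 0 <= val_of v Sstar.
  rewrite /val_of; apply: sumr_ge0 => i _; exact: ltW.
nra.
Qed.
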